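(* Consider DIVIDE-THROW-RESIDUE. Then $\mathcal{SG}(n)=i_o(n)=k$, if $n= 2^m(2k-1)$, for some integer $m\ge 0$.
   Context: DIVIDE-THROW-RESIDUE is the impartial normal-play heap game where a move from a heap $n$ writes $n=kd+r$ with $1\le d<n$, $k\ge1$, $0\le r<d$, and moves to the disjunctive sum of $k$ heaps of size $d$ (the remainder $r$ is discarded); a heap of size $1$ is terminal. $\mathcal{SG}$ denotes the Sprague-Grundy value (mex rule, nim-sum for disjunctive sums). $i_o(n)$ is the index of the largest odd factor: $i_o(2^m(2k-1))=k$. *)

(* Defs.v *)
From mathcomp Require Import all_boot.
From Stdlib Require PeanoNat.
Set Implicit Arguments. Unset Strict Implicit. Unset Printing Implicit Defensive.

Definition mex (s : seq nat) : nat := find (fun i => i \notin s) (iota 0 (size s).+1).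

Definition nimsum (s : seq nat) : nat := foldr Nat.lxor 0 s.

(* A move from heap n chooses d, k, r with n = k*d + r, 1 <= d < n, k >= 1,
   0 <= r < d, and leads to the disjunctive sum of k heaps of size d, whose
   SG value is the nim-sum of k copies of SG(d). *)
Fixpoint sgf (fuel n : nat) : nat :=
  match fuel with
  | 0 => 0
  | fuel'.+1 =>
      mex [seq nimsum (nseq (t.1.2) (sgf fuel' t.1.1)) |
             t <- [seq t <- flatten [seq [seq (dk, r) | r <- iota 0 dk.1]
                                   | dk <- [seq (d, k) | d <- iota 1 n.-1, k <- iota 1 n]]
                  | n == t.1.2 * t.1.1 + t.2]]
  end.

(* SG(n); fuel n.+1 is more than enough since every option has heaps of size < n. *)
Definition SG (n : nat) : nat := sgf n.+1 n.

(* index of the largest odd factor: i_o(2^m (2k-1)) = k *)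
Definition io (n : nat) : nat := (n %/ 2 ^ logn 2 n).+1./2.

(* Main.v *)
Require Import Defs.
From mathcomp Require Import all_boot.
From mathcomp Require Import zify.
From Stdlib Require PeanoNat.

Set Implicit Arguments. Unset Strict Implicit. Unset Printing Implicit Defensive.

Definition moves (n : nat) :=
  [seq t <- flatten [seq [seq (dk, r) | r <- iota 0 dk.1]
                       | dk <- [seq (d, k) | d <- iota 1 n.-1, k <- iota 1 n]]
      | n == t.1.2 * t.1.1 + t.2].

Lemma sgfS fuel n :
  sgf fuel.+1 n = mex [seq nimsum (nseq t.1.2 (sgf fuel t.1.1)) | t <- moves n].
Proof. by []. Qed.

Lemma movesP n t : t \in moves n ->
  [/\ 1 <= t.1.1 < n, t.1.2 <= n, t.2 < t.1.1 & n = t.1.2 * t.1.1 + t.2].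
Proof.
case: t => [[d k] r] /=.
rewrite mem_filter => /andP [/eqP /= hn /flatten_mapP [[d' k'] hdk]].
move=> /mapP [r' hr [e1 e2 e3]] /=.
move: hdk => /allpairsP [[d'' k''] [/= hd hk [e4 e5]]] /=.
move: hd hk hr; rewrite !mem_iota /= => hd hk hr.
subst; split; lia.
Qed.

Lemma inmoves n d k r : 1 <= d < n -> 1 <= k <= n -> r < d -> n = k * d + r ->
  ((d, k), r) \in moves n.
Proof.
move=> hd hk hr hn.
rewrite mem_filter /= hn eqxx /=; rewrite -hn.
apply/flatten_mapP; exists (d, k).
  apply/allpairsP; exists (d, k); split => //=; rewrite mem_iota; try lia; idtac.
apply/mapP; exists r => //; rewrite mem_iota /=; lia.
Qed.

Lemma nimsum_nseq k v : nimsum (nseq k v) = if odd k then v else 0.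
Proof.
elim: k => [|k IH] //=.
rewrite /nimsum /= -/(nimsum _) IH.
case: (odd k) => /=.
  exact: PeanoNat.Nat.lxor_nilpotent.
exact: PeanoNat.Nat.lxor_0_r.
Qed.

Lemma mexP s v : (forall i, i < v -> i \in s) -> v \notin s -> mex s = v.
Proof.
move=> hin hv.
have hsz : v <= size s.
  have := @uniq_leq_size _ (iota 0 v) s (iota_uniq 0 v).
  rewrite size_iota; apply => i; rewrite mem_iota => /andP [_ hi]; exact: hin.
rewrite /mex.
have -> : (size s).+1 = v + ((size s).+1 - v) by lia.
rewrite iotaD find_cat.
have -> : has (fun i => i \notin s) (iota 0 v) = false.
  apply/negbTE/hasPn => i; rewrite mem_iota => /andP [_ hi]; rewrite negbK; exact: hin.
rewrite size_iota add0n.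
have -> : (size s).+1 - v = ((size s) - v).+1 by lia.
by rewrite /= hv addn0.
Qed.

Lemma io_form a j : io (2 ^ a * j.*2.+1) = j.+1.
Proof.
rewrite /io.
have ho : logn 2 (j.*2.+1) = 0 by apply: logn_coprime; rewrite coprime2n /= odd_double.
rewrite lognM ?expn_gt0 // ho pfactorK // addn0 mulKn ?expn_gt0 //.
by rewrite -doubleS doubleK.
Qed.

Lemma decomp d : 0 < d -> exists a j, d = 2 ^ a * j.*2.+1.
Proof.
move=> hd; case: (pfactor_coprime (isT : prime 2) hd) => o ho hdo.
exists (logn 2 d), o./2.
rewrite coprime2n in ho.
have := odd_double_half o; rewrite ho => h.
have E : o./2.*2.+1 = o by rewrite -{2}h. by rewrite E mulnC.
Qed.

Definition fsg n := if n < 2 then 0 else io n.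

Lemma main fuel n : n < fuel -> sgf fuel n = fsg n.
Proof.
elim: fuel n => [|fuel IH] n // hn.
rewrite sgfS.
case: (ltnP n 2) => hn2.
  by case: n hn hn2 => [|[|n]].
have -> : [seq nimsum (nseq t.1.2 (sgf fuel t.1.1)) | t <- moves n] =
          [seq nimsum (nseq t.1.2 (fsg t.1.1)) | t <- moves n].
  apply/eq_in_map => t /movesP [h1 _ _ _]; rewrite IH //; case/andP: h1 => _ h1; exact: leq_trans h1 hn.
have [m [j hnj]] := decomp (ltnW hn2).
have -> : fsg n = j.+1 by rewrite /fsg ltnNge hn2 hnj io_form.
apply: mexP.
  move=> [_|i hi].
    apply/mapP; exists ((1, n), 0); first by apply: inmoves; lia.
    by rewrite /= nimsum_nseq /fsg /=; case: odd.
  set o := i.*2.+1.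
  have ho : 0 < o by [].
  have hon : o <= n by rewrite hnj; nia.
  set q := n %/ o.
  have hq : 0 < q by rewrite divn_gt0.
  have := trunc_log_bounds (isT : 1 < 2) hq.
  set a := trunc_log 2 q => /andP [h1 h2].
  set d := 2 ^ a * o.
  have hdn : d <= n.
    apply: leq_trans (leq_divM n o); rewrite /d leq_mul2r h1 orbT //.
  have h2d : n < 2 * d.
    move: h2; rewrite ltn_divLR // /d expnS; lia.
  have hdn' : d != n.
    apply/eqP => E; have := io_form a i; rewrite -/o -/d E hnj io_form; lia.
  apply/mapP; exists ((d, 1), n - d).
    apply: inmoves; lia.
  rewrite /= /fsg.
  have -> : d < 2 = false by lia.
  by rewrite /d io_form /nimsum /= PeanoNat.Nat.lxor_0_r.
apply/mapP => [[[[d kk] r] ht]].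
have /= [h1 h2 h3 h4] := movesP ht.
rewrite nimsum_nseq /fsg.
case hod: (odd kk) => //.
case: ltnP => hd2 //.
have [b [j' hdj]] := decomp (ltnW hd2).
rewrite hdj io_form => [[ej]]; subst j'.
have ham : b < m.
  rewrite -(ltn_exp2l _ _ (isT : 1 < 2)) -(ltn_pmul2r (isT : 0 < j.*2.+1)) -hdj -hnj.
  by case/andP: h1.
have hnd : n = 2 ^ (m - b) * d.
  by rewrite hnj hdj mulnA -expnD subnK // ltnW.
have hk : kk = 2 ^ (m - b).
  have hd0 : 0 < d by lia.
  have := mulnK (2 ^ (m - b)) hd0; rewrite -hnd h4 divnMDl // divn_small // addn0.
  by [].
move: hod; rewrite hk oddX /=.
have : 0 < m - b by rewrite subn_gt0. by case: (m - b).
Qed.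

Theorem mainTheorem11 (n m k : nat) :
  2 <= n -> 1 <= k -> n = 2 ^ m * (2 * k - 1) -> SG n = io n /\ io n = k.
Proof.
move=> hn hk hnk.
have hio : io n = k.
  case: k hk hnk => [|j] // _ hnk.
  by rewrite hnk (_ : 2 * j.+1 - 1 = j.*2.+1) ?io_form //; rewrite -mul2n; lia.
split => //.
rewrite /SG main // /fsg.
by case: ltnP => //; lia.
Qed.
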